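(* Let $A$ be an approximately biprojective Banach algebra and let $\phi\in\Delta(A)$. If $A$ has a left approximate identity, then $A$ is left $\phi$-contractible; if $A$ has a right approximate identity, then $A$ is right $\phi$-contractible.
   Context: $\Delta(A)$ is the set of nonzero multiplicative linear functionals on $A$. $A$ is approximately biprojective if there is a net $(\rho_\alpha)$ of continuous $A$-bimodule morphisms $A\to A\otimes_pA$ with $\pi_A\circ\rho_\alpha(a)\to a$ for all $a\in A$, where $\pi_A(a\otimes b)=ab$ and $a\cdot(b\otimes c)=ab\otimes c$, $(b\otimes c)\cdot a=b\otimes ca$. $A$ is left $\phi$-contractible if there is $m\in A$ with $am=\phi(a)m$ for all $a\in A$ and $\phi(m)=1$; right $\phi$-contractible if there is $m\in A$ with $ma=\phi(a)m$ for all $a$ and $\phi(m)=1$. *)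

(* Defs.v *)
From mathcomp Require Import all_boot all_algebra complex.
From mathcomp Require Import all_classical all_reals all_analysis.
Import numFieldNormedType.Exports.
Import GRing.Theory Num.Theory.
Local Open Scope ring_scope.

Set Implicit Arguments.
Unset Strict Implicit.
Unset Printing Implicit Defensive.

Definition is_linear (R : realType) (U V : lmodType R[i]) (f : U -> V) : Prop :=
  (forall x y, f (x + y) = f x + f y) /\ (forall (k : R[i]) x, f (k *: x) = k *: f x).

Definition is_bilinear (R : realType) (U V W : lmodType R[i]) (f : U -> V -> W) : Prop :=
  (forall y, is_linear (fun x => f x y)) /\ (forall x, is_linear (f x)).

Definition banach_algebra (R : realType) (A : completeNormedModType R[i])
    (mul : A -> A -> A) : Prop :=
  [/\ associative mul, is_bilinear mul &
      forall a b, `|mul a b| <= `|a| * `|b| ].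

Definition character (R : realType) (A : completeNormedModType R[i])
    (mul : A -> A -> A) (phi : A -> R[i]) : Prop :=
  [/\ is_linear (phi : A -> R[i]^o),
      forall a b, phi (mul a b) = phi a * phi b &
      exists a, phi a != 0 ].

Definition directed (I : Type) (le : I -> I -> Prop) : Prop :=
  [/\ inhabited I, forall i, le i i,
      forall i j k, le i j -> le j k -> le i k &
      forall i j, exists k, le i k /\ le j k ].

Definition net_cvg (R : realType) (V : normedModType R[i]) (I : Type)
    (le : I -> I -> Prop) (x : I -> V) (l : V) : Prop :=
  forall eps : R[i], 0 < eps ->
    exists i0, forall i, le i0 i -> `|x i - l| < eps.

Definition has_left_approx_identity (R : realType) (A : completeNormedModType R[i])
    (mul : A -> A -> A) : Prop :=
  exists (I : Type) (le : I -> I -> Prop) (e : I -> A),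
    directed le /\ forall a, net_cvg le (fun i => mul (e i) a) a.

Definition has_right_approx_identity (R : realType) (A : completeNormedModType R[i])
    (mul : A -> A -> A) : Prop :=
  exists (I : Type) (le : I -> I -> Prop) (e : I -> A),
    directed le /\ forall a, net_cvg le (fun i => mul a (e i)) a.

(* (T, tp) is the projective tensor product A \otimes_p A, characterised by
   its universal property: tp is bilinear with |a (x) b| <= |a||b|, and
   every bounded bilinear map f into a Banach space E with
   |f a b| <= M |a| |b| factors uniquely (among continuous linear maps)
   through a linear map g with |g x| <= M |x|.  Together with completeness
   of T this determines T up to isometric isomorphism. *)
Definition proj_tensor (R : realType) (A T : completeNormedModType R[i])
    (tp : A -> A -> T) : Prop :=
  [/\ is_bilinear tp,
      forall a b, `|tp a b| <= `|a| * `|b| &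
      forall (E : completeNormedModType R[i]) (f : A -> A -> E) (M : R[i]),
        is_bilinear f -> (forall a b, `|f a b| <= M * `|a| * `|b|) ->
        exists g : T -> E,
          [/\ is_linear g, forall x, `|g x| <= M * `|x|,
              forall a b, g (tp a b) = f a b &
              forall g' : T -> E, is_linear g' -> continuous g' ->
                (forall a b, g' (tp a b) = f a b) -> g' = g ] ].

Definition left_action (R : realType) (A T : completeNormedModType R[i])
    (mul : A -> A -> A) (tp : A -> A -> T) (la : A -> T -> T) : Prop :=
  forall a, [/\ is_linear (la a), continuous (la a) &
                forall b c, la a (tp b c) = tp (mul a b) c].

Definition right_action (R : realType) (A T : completeNormedModType R[i])
    (mul : A -> A -> A) (tp : A -> A -> T) (ra : A -> T -> T) : Prop :=
  forall a, [/\ is_linear (ra a), continuous (ra a) &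
                forall b c, ra a (tp b c) = tp b (mul c a)].

Definition product_map (R : realType) (A T : completeNormedModType R[i])
    (mul : A -> A -> A) (tp : A -> A -> T) (piA : T -> A) : Prop :=
  [/\ is_linear piA, continuous piA & forall a b, piA (tp a b) = mul a b].

Definition approx_biprojective (R : realType) (A T : completeNormedModType R[i])
    (mul : A -> A -> A) (la ra : A -> T -> T) (piA : T -> A) : Prop :=
  exists (I : Type) (le : I -> I -> Prop) (rho : I -> A -> T),
    [/\ directed le,
        forall i, [/\ is_linear (rho i), continuous (rho i) &
                      forall a b, rho i (mul a b) = la a (rho i b)
                                  /\ rho i (mul a b) = ra b (rho i a)] &
        forall a, net_cvg le (fun i => piA (rho i a)) a ].

Definition left_phi_contractible (R : realType) (A : completeNormedModType R[i])
    (mul : A -> A -> A) (phi : A -> R[i]) : Prop :=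
  exists m : A, (forall a, mul a m = phi a *: m) /\ phi m = 1.

Definition right_phi_contractible (R : realType) (A : completeNormedModType R[i])
    (mul : A -> A -> A) (phi : A -> R[i]) : Prop :=
  exists m : A, (forall a, mul m a = phi a *: m) /\ phi m = 1.

(* Main.v *)
Require Import Defs.
From mathcomp Require Import all_boot all_order all_algebra complex.
From mathcomp Require Import all_classical all_reals all_analysis.
From mathcomp Require Import ring.
Import numFieldNormedType.Exports.
Import Order.TTheory GRing.Theory Num.Theory.
Local Open Scope ring_scope.
Local Open Scope classical_set_scope.

Section Helpers.
Variable R : realType.

Lemma geo_small {q e : R[i]} : 0 <= q -> q < 1 -> 0 < e -> exists N : nat, q ^+ N < e.
Proof.
move=> q0 q1 e0.
have qr : q = (complex.Re q)%:C%C by rewrite RRe_real // ger0_real.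
have er : e = (complex.Re e)%:C%C by rewrite RRe_real // gtr0_real.
move: q0 q1 e0; rewrite qr er lecE !ltcE /= => /andP[_ q0] /andP[_ q1] /andP[_ e0].
set r := complex.Re q; set s := complex.Re e.
have : (GRing.exp r : R ^nat) @ \oo --> 0 by apply: cvg_expr; rewrite ger0_norm.
move/cvgrPdist_lt => /(_ s e0) [N _ HN].
exists N; rewrite -rmorphXn ltcR.
have := HN N (leqnn N); rewrite sub0r normrN ger0_norm //; exact: exprn_ge0.
Qed.

Lemma lip_cont (V W : normedModType R[i]) (f : V -> W) (M : R[i]) :
  0 <= M -> (forall x y, `|f x - f y| <= M * `|x - y|) -> continuous f.
Proof.
move=> M0 Hf x; apply/cvgrPdist_lt => e e0.
have M1 : 0 < M + 1 by rewrite ltr_wpDl.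
have MM : M <= M + 1 by rewrite lerDl.
have ee : 0 < e / (M + 1) by rewrite divr_gt0.
near=> y.
apply: (le_lt_trans (Hf x y)).
apply: (le_lt_trans (ler_wpM2r (normr_ge0 _) MM)).
rewrite -ltr_pdivlMl // mulrC.
near: y; have := @cvg_id _ (nbhs x); move/cvgrPdist_lt; exact.
Unshelve. all: by end_near.
Qed.

Lemma net_unique (V : normedModType R[i]) (I : Type) (le : I -> I -> Prop)
  (x : I -> V) l1 l2 : directed le -> net_cvg le x l1 -> net_cvg le x l2 -> l1 = l2.
Proof.
move=> [_ _ _ dir] H1 H2.
have [//|ne] := eqVneq l1 l2.
have d0 : 0 < `|l1 - l2| / 2 by rewrite divr_gt0 // normr_gt0 subr_eq0.
have [i1 Hi1] := H1 _ d0; have [i2 Hi2] := H2 _ d0.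
have [k [k1 k2]] := dir i1 i2.
have H := ltrD (Hi1 k k1) (Hi2 k k2); rewrite -splitr in H.
have := ler_distD (x k) l1 l2; rewrite [`|l1 - x k|]distrC => /le_lt_trans /(_ H).
by rewrite ltxx.
Qed.

Section BA.
Variables (A : completeNormedModType R[i]) (mul : A -> A -> A).
Hypothesis BA : banach_algebra mul.

Lemma mulD a x y : mul a (x + y) = mul a x + mul a y.
Proof. by case: BA => _ [_ H] _; case: (H a). Qed.
Lemma mulZ a (k : R[i]) x : mul a (k *: x) = k *: mul a x.
Proof. by case: BA => _ [_ H] _; case: (H a). Qed.
Lemma Dmul a x y : mul (x + y) a = mul x a + mul y a.
Proof. by case: BA => _ [H _] _; case: (H a). Qed.
Lemma Zmul a (k : R[i]) x : mul (k *: x) a = k *: mul x a.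
Proof. by case: BA => _ [H _] _; case: (H a). Qed.
Lemma mulB a x y : mul a (x - y) = mul a x - mul a y.
Proof. by rewrite mulD -scaleN1r mulZ scaleN1r. Qed.
Lemma Bmul a x y : mul (x - y) a = mul x a - mul y a.
Proof. by rewrite Dmul -scaleN1r Zmul scaleN1r. Qed.
Lemma mul0 a : mul a 0 = 0.
Proof. by have := mulB a 0 0; rewrite !subrr. Qed.
Lemma mul_norm a b : `|mul a b| <= `|a| * `|b|.
Proof. by case: BA. Qed.
Lemma mulA : associative mul.
Proof. by case: BA. Qed.
Lemma mul_contl a : continuous (mul a).
Proof.
apply: (@lip_cont _ _ _ `|a|) => // x y; rewrite -mulB; exact: mul_norm.
Qed.
Lemma mul_contr a : continuous (mul^~ a).
Proof.
apply: (@lip_cont _ _ _ `|a|) => // x y; rewrite -Bmul mulrC; exact: mul_norm.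
Qed.

Lemma neumann {b} : `|b| < 1 -> exists s, s = b + mul b s.
Proof.
move=> b1; set q := `|b|.
pose g x := b + mul b x.
have gL x y : `|g x - g y| <= q * `|x - y|.
  by rewrite /g opprD addrACA subrr add0r -mulB mul_norm.
pose p n := iter n g 0.
have step n : `|p n.+1 - p n| <= q ^+ n * q.
  elim: n => [|n IH]; first by rewrite /p /= /g expr0 mul1r mul0 addr0 subr0.
  rewrite exprS -mulrA; apply: le_trans (gL _ _) _.
  by apply: ler_wpM2l; [exact: normr_ge0 | exact: IH].
have q0 : 0 <= q by exact: normr_ge0.
have q1n : 1 - q != 0 by rewrite subr_eq0 eq_sym lt_eqF.
have sumb m k : `|p (m + k)%N - p m| <= q * \sum_(0 <= j < k) geometric (q ^+ m) q j.
  elim: k => [|k IH]; first by rewrite addn0 subrr normr0 big_geq // mulr0.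
  rewrite big_nat_recr //= addnS mulrDr.
  have -> : p (m + k).+1 - p m = (p (m + k).+1 - p (m + k)%N) + (p (m + k)%N - p m).
    by rewrite addrA subrK.
  apply: le_trans (ler_normD _ _) _; rewrite addrC lerD //.
  by apply: le_trans (step _) _; rewrite mulrC exprD.
pose C := q / (1 - q).
have C0 : 0 <= C by rewrite divr_ge0 // subr_ge0 ltW.
have bound m n : (m <= n)%N -> `|p n - p m| <= C * q ^+ m.
  move=> mn; rewrite -(subnKC mn); apply: le_trans (sumb _ _) _.
  have qn1 : q != 1 by rewrite /q lt_eqF.
  have := geometric_seriesE (q ^+ m) qn1.
  rewrite /series /= => /(congr1 (fun f => f (n - m)%N)) /= ->.
  have -> : q * (q ^+ m * (1 - q ^+ (n - m)) / (1 - q)) = C * q ^+ m * (1 - q ^+ (n - m)).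
    by rewrite /C; ring.
  apply: ler_piMr; first by rewrite mulr_ge0 // exprn_ge0.
  by rewrite lerBlDr lerDl exprn_ge0.
have pc : cvgn p.
  apply/cauchy_cvgP; apply/cauchy_ballP => e e0; near_simpl.
  have C1 : 0 < C + 1 by rewrite ltr_wpDl.
  have [N HN] := geo_small q0 b1 (divr_gt0 e0 C1 : 0 < e / (C + 1)).
  have key n m : (N <= n)%N -> (n <= m)%N -> `|p m - p n| < e.
    move=> Nn nm; apply: le_lt_trans (bound _ _ nm) _.
    apply: (@le_lt_trans _ _ ((C + 1) * q ^+ N)); last by rewrite mulrC -ltr_pdivlMr.
    apply: ler_pM => //; first exact: exprn_ge0.
      by rewrite lerDl.
    by apply: ler_wiXn2l => //; exact: ltW.
  exists ([set n | (N <= n)%N], [set n | (N <= n)%N]); first by split; exists N.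
  move=> [n m] [/= Nn Nm]; rewrite -ball_normE /=.
  by case: (leqP n m) => nm; [rewrite distrC; apply: key | apply: key => //; exact: ltnW].
have gc : continuous g := @lip_cont _ _ g q q0 gL.
have h1 : (g \o p) @ \oo --> g (limn p) by apply: continuous_cvg; [exact: gc | exact: pc].
have h2 : (g \o p) @ \oo --> limn p.
  have -> : g \o p = (fun n => p n.+1) by [].
  by rewrite cvg_shiftS.
exists (limn p); exact: (cvg_unique (@norm_hausdorff _ _) h2 h1).
Qed.
Lemma char_bound (phi : A -> R[i]) : character mul phi -> forall a, `|phi a| <= `|a|.
Proof.
case=> [[phiD phiZ] phiM _] a.
rewrite real_leNgt ?normr_real //; apply/negP => H.
have pa0 : phi a != 0.
  by rewrite -normr_gt0; apply: le_lt_trans H.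
pose b := (phi a)^-1 *: a.
have pb : phi b = 1.
  by rewrite /b phiZ; exact: mulVf.
have b1 : `|b| < 1.
  by rewrite /b normrZ normfV ltr_pdivrMl ?normr_gt0 // mulr1.
have [s Hs] := neumann b1.
have : phi s = 1 + phi s by rewrite {1}Hs phiD phiM pb mul1r.
move/eqP; rewrite -subr_eq0 opprD addrA addrAC subrr add0r oppr_eq0.
by rewrite oner_eq0.
Qed.

Section Tensor.
Variables (T : completeNormedModType R[i]) (tp : A -> A -> T) (phi : A -> R[i]).
Hypotheses (PT : proj_tensor tp) (CH : character mul phi).

Lemma phiD x y : phi (x + y) = phi x + phi y.
Proof. by case: CH => [[H _] _ _]. Qed.
Lemma phiZ k x : phi (k *: x) = k * phi x.
Proof. by case: CH => [[_ H] _ _]; rewrite H. Qed.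
Lemma phiM x y : phi (mul x y) = phi x * phi y.
Proof. by case: CH. Qed.
Lemma phiB x y : phi (x - y) = phi x - phi y.
Proof. by rewrite phiD -scaleN1r phiZ mulN1r. Qed.
Lemma phib x : `|phi x| <= `|x|.
Proof. exact: char_bound. Qed.
Lemma phiv_cont (v : A) : continuous (fun a => phi a *: v).
Proof.
apply: (@lip_cont _ _ _ `|v|) => // x y.
by rewrite -scalerBl -phiB normrZ mulrC; apply: ler_wpM2l => //; exact: phib.
Qed.

Lemma tensor_ext (h1 h2 : T -> A) (f : A -> A -> A) (M : R[i]) :
  is_bilinear f -> (forall a b, `|f a b| <= M * `|a| * `|b|) ->
  is_linear h1 -> continuous h1 -> (forall a b, h1 (tp a b) = f a b) ->
  is_linear h2 -> continuous h2 -> (forall a b, h2 (tp a b) = f a b) -> h1 = h2.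
Proof.
move=> fB fM l1 c1 e1 l2 c2 e2.
case: PT => _ _ /(_ A f M fB fM) [g [_ _ _ U]].
by rewrite (U h1) // (U h2).
Qed.

Lemma tensor_ex (f : A -> A -> A) (M : R[i]) : 0 <= M ->
  is_bilinear f -> (forall a b, `|f a b| <= M * `|a| * `|b|) ->
  exists h : T -> A, [/\ is_linear h, continuous h & forall a b, h (tp a b) = f a b].
Proof.
move=> M0 fB fM.
case: PT => _ _ /(_ A f M fB fM) [g [[gD gZ] gN ge _]].
exists g; split => //.
apply: (@lip_cont _ _ g M M0) => x y.
by rewrite -scaleN1r -gZ -gD scaleN1r gN.
Qed.

Lemma lin_comp (V W X : lmodType R[i]) (f : V -> W) (g : W -> X) :
  is_linear f -> is_linear g -> is_linear (g \o f).
Proof. by move=> [fD fZ] [gD gZ]; split => *; rewrite /= ?fD ?gD ?fZ ?gZ. Qed.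
Lemma lin_mul x : is_linear (mul x).
Proof. by split => *; rewrite ?mulD ?mulZ. Qed.
Lemma lin_mulr y : is_linear (mul^~ y).
Proof. by split => *; rewrite ?Dmul ?Zmul. Qed.
Lemma lin_scale (V : lmodType R[i]) (c : R[i]) : is_linear (fun v : V => c *: v).
Proof. by split => *; rewrite ?scalerDr ?scalerA // mulrC. Qed.
Lemma lin_phiv (v : A) : is_linear (fun a => phi a *: v).
Proof. by split => *; rewrite ?phiD ?scalerDl ?phiZ ?scalerA. Qed.
Lemma scale_cont (V : normedModType R[i]) (c : R[i]) : continuous (fun v : V => c *: v).
Proof. by apply: (@lip_cont _ _ _ `|c|) => // x y; rewrite -scalerBr normrZ. Qed.
Lemma lin_id : is_linear (@id A).
Proof. by []. Qed.
Lemma cont_comp (U V W : topologicalType) (f : U -> V) (g : V -> W) :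
  continuous f -> continuous g -> continuous (g \o f).
Proof. by move=> cf cg x; apply: continuous_comp; [exact: cf | exact: cg]. Qed.

Lemma bil1 (L : A -> A) : is_linear L -> is_bilinear (fun a b => phi b *: L a).
Proof.
move=> [LD LZ]; split => y; split => *.
- by rewrite LD scalerDr.
- by rewrite LZ !scalerA mulrC.
- by rewrite phiD scalerDl.
- by rewrite phiZ scalerA.
Qed.
Lemma bil2 (L : A -> A) : is_linear L -> is_bilinear (fun a b => phi a *: L b).
Proof.
move=> [LD LZ]; split => y; split => *.
- by rewrite phiD scalerDl.
- by rewrite phiZ scalerA.
- by rewrite LD scalerDr.
- by rewrite LZ !scalerA mulrC.
Qed.

Lemma phi_one : exists x0, phi x0 = 1.
Proof.
case: CH => _ _ [a pa]; exists ((phi a)^-1 *: a).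
by rewrite phiZ mulVf.
Qed.

Lemma pick_i (piA : T -> A) (I : Type) (le : I -> I -> Prop) (rho : I -> A -> T) x0 :
  directed le -> phi x0 = 1 -> net_cvg le (fun i => piA (rho i x0)) x0 ->
  exists i, phi (piA (rho i x0)) != 0.
Proof.
move=> [_ refl _ _] px0 /(_ 1 ltr01) [i0 Hi0]; exists i0.
have := Hi0 i0 (refl i0); apply: contraTneq => H.
rewrite -real_leNgt ?real1 ?normr_real //.
by rewrite (le_trans _ (phib _)) // phiB H px0 sub0r normrN normr1.
Qed.

Lemma left_case (la ra : A -> T -> T) (piA : T -> A) :
  left_action mul tp la -> right_action mul tp ra -> product_map mul tp piA ->
  approx_biprojective mul la ra piA -> has_left_approx_identity mul ->
  left_phi_contractible mul phi.
Proof.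
move=> LA RA [piL piC piT] [I [le [rho [dir rhoP rcv]]]] [J [lej [e [dirJ ecv]]]].
have [x0 px0] := phi_one.
have bnd (a b : A) : `|phi b *: a| <= 1 * `|a| * `|b|.
  by rewrite normrZ mul1r mulrC ler_wpM2l // phib.
have [psi [psiL psiC psiT]] := @tensor_ex (fun a b => phi b *: a) 1 ler01
  (@bil1 id lin_id) bnd.
have E1 x : psi \o la x = mul x \o psi.
  case: (LA x) => laL laC laT.
  apply: (@tensor_ext _ _ (fun a b => phi b *: mul x a) `|x|).
  - exact: (@bil1 _ (lin_mul x)).
  - move=> a b; rewrite normrZ mulrC.
    by apply: ler_pM => //; [exact: mul_norm | exact: phib].
  - exact: lin_comp laL psiL.
  - exact: cont_comp laC psiC.
  - by move=> a b /=; rewrite laT psiT.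
  - exact: lin_comp psiL (lin_mul x).
  - exact: cont_comp psiC (mul_contl x).
  - by move=> a b /=; rewrite psiT mulZ.
have E2 y : psi \o ra y = (fun t => phi y *: psi t).
  case: (RA y) => raL raC raT.
  apply: (@tensor_ext _ _ (fun a b => phi b *: (phi y *: a)) `|phi y|).
  - exact: (@bil1 _ (@lin_scale A (phi y))).
  - move=> a b; rewrite !normrZ mulrC; apply: ler_wpM2l; [by rewrite mulr_ge0 | exact: phib].
  - exact: lin_comp raL psiL.
  - exact: cont_comp raC psiC.
  - by move=> a b /=; rewrite raT psiT phiM !scalerA mulrC.
  - exact: lin_comp psiL (@lin_scale A (phi y)).
  - exact: cont_comp psiC (scale_cont A (phi y)).
  - by move=> a b /=; rewrite psiT !scalerA mulrC.
have E3 t : phi (psi t) = phi (piA t).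
  have E : (fun a => phi a *: x0) \o psi = (fun a => phi a *: x0) \o piA.
    apply: (@tensor_ext _ _ (fun a b => phi b *: (phi a *: x0)) `|x0|).
    - exact: (@bil1 _ (lin_phiv _)).
    - move=> a b; rewrite !normrZ mulrC (mulrC `|phi a|).
      apply: ler_pM; rewrite ?mulr_ge0 //; last exact: phib.
      by apply: ler_wpM2l => //; exact: phib.
    - exact: lin_comp psiL (lin_phiv _).
    - exact: cont_comp psiC (phiv_cont _).
    - by move=> a b /=; rewrite psiT phiZ scalerA.
    - exact: lin_comp (conj piL piC).1 (lin_phiv _).
    - exact: cont_comp piC (phiv_cont _).
    - by move=> a b /=; rewrite piT phiM scalerA mulrC.
  have := congr1 (fun h => phi (h t)) E; rewrite /= !phiZ px0 !mulr1; exact.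
have [i pi0] := @pick_i piA I le rho x0 dir px0 (rcv x0).
case: (rhoP i) => _ _ rhoM.
have eta1 x y : psi (rho i (mul x y)) = mul x (psi (rho i y)).
  by rewrite (rhoM x y).1; exact: (congr1 (fun h => h (rho i y)) (E1 x)).
have eta2 x y : psi (rho i (mul x y)) = phi y *: psi (rho i x).
  by rewrite (rhoM x y).2; exact: (congr1 (fun h => h (rho i x)) (E2 y)).
set m := psi (rho i x0).
have key a : mul a m = phi a *: m.
  have eq : (fun j => mul (e j) (mul a m)) = (fun j => mul (e j) (phi a *: m)).
    apply: funext => j; rewrite /m -!eta1 mulZ -eta1 mulA !eta2 px0 !scale1r.
    done.
  have := ecv (phi a *: m); rewrite -eq => H.
  exact: net_unique dirJ (ecv _) H.
set c := phi m.
have c0 : c != 0 by rewrite /c /m E3.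
exists (c^-1 *: m); split => [a|]; last by rewrite phiZ mulVf.
by rewrite mulZ key !scalerA mulrC.
Qed.

Lemma right_case (la ra : A -> T -> T) (piA : T -> A) :
  left_action mul tp la -> right_action mul tp ra -> product_map mul tp piA ->
  approx_biprojective mul la ra piA -> has_right_approx_identity mul ->
  right_phi_contractible mul phi.
Proof.
move=> LA RA [piL piC piT] [I [le [rho [dir rhoP rcv]]]] [J [lej [e [dirJ ecv]]]].
have [x0 px0] := phi_one.
have bnd (a b : A) : `|phi a *: b| <= 1 * `|a| * `|b|.
  by rewrite normrZ mul1r ler_wpM2r // phib.
have [chi [chiL chiC chiT]] := @tensor_ex (fun a b => phi a *: b) 1 ler01
  (@bil2 id lin_id) bnd.
have E1 x : chi \o la x = (fun t => phi x *: chi t).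
  case: (LA x) => laL laC laT.
  apply: (@tensor_ext _ _ (fun a b => phi a *: (phi x *: b)) `|phi x|).
  - exact: (@bil2 _ (@lin_scale A (phi x))).
  - move=> a b; rewrite !normrZ mulrA (mulrC `|phi a|) -!mulrA.
    apply: ler_wpM2l => //; apply: ler_wpM2r => //; exact: phib.
  - exact: lin_comp laL chiL.
  - exact: cont_comp laC chiC.
  - by move=> a b /=; rewrite laT chiT phiM !scalerA mulrC.
  - exact: lin_comp chiL (@lin_scale A (phi x)).
  - exact: cont_comp chiC (scale_cont A (phi x)).
  - by move=> a b /=; rewrite chiT !scalerA mulrC.
have E2 y : chi \o ra y = mul^~ y \o chi.
  case: (RA y) => raL raC raT.
  apply: (@tensor_ext _ _ (fun a b => phi a *: mul b y) `|y|).
  - exact: (@bil2 _ (lin_mulr y)).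
  - move=> a b; rewrite normrZ.
    have -> : `|y| * `|a| * `|b| = `|a| * (`|b| * `|y|) by ring.
    by apply: ler_pM => //; [exact: phib | exact: mul_norm].
  - exact: lin_comp raL chiL.
  - exact: cont_comp raC chiC.
  - by move=> a b /=; rewrite raT chiT.
  - exact: lin_comp chiL (lin_mulr y).
  - exact: cont_comp chiC (mul_contr y).
  - by move=> a b /=; rewrite chiT Zmul.
have E3 t : phi (chi t) = phi (piA t).
  have E : (fun a => phi a *: x0) \o chi = (fun a => phi a *: x0) \o piA.
    apply: (@tensor_ext _ _ (fun a b => phi a *: (phi b *: x0)) `|x0|).
    - exact: (@bil2 _ (lin_phiv _)).
    - move=> a b; rewrite !normrZ.
      have -> : `|x0| * `|a| * `|b| = `|a| * (`|b| * `|x0|) by ring.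
      apply: ler_pM; rewrite ?mulr_ge0 //; first exact: phib.
      by apply: ler_wpM2r => //; exact: phib.
    - exact: lin_comp chiL (lin_phiv _).
    - exact: cont_comp chiC (phiv_cont _).
    - by move=> a b /=; rewrite chiT phiZ scalerA.
    - exact: lin_comp (conj piL piC).1 (lin_phiv _).
    - exact: cont_comp piC (phiv_cont _).
    - by move=> a b /=; rewrite piT phiM scalerA.
  have := congr1 (fun h => phi (h t)) E; rewrite /= !phiZ px0 !mulr1; exact.
have [i pi0] := @pick_i piA I le rho x0 dir px0 (rcv x0).
case: (rhoP i) => _ _ rhoM.
have eta1 x y : chi (rho i (mul x y)) = phi x *: chi (rho i y).
  by rewrite (rhoM x y).1; exact: (congr1 (fun h => h (rho i y)) (E1 x)).
have eta2 x y : chi (rho i (mul x y)) = mul (chi (rho i x)) y.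
  by rewrite (rhoM x y).2; exact: (congr1 (fun h => h (rho i x)) (E2 y)).
set m := chi (rho i x0).
have key a : mul m a = phi a *: m.
  have eq : (fun j => mul (mul m a) (e j)) = (fun j => mul (phi a *: m) (e j)).
    apply: funext => j; rewrite /m -!eta2 Zmul -eta2 -mulA !eta1 px0 !scale1r.
    done.
  have := ecv (phi a *: m); rewrite -eq => H.
  exact: net_unique dirJ (ecv _) H.
set c := phi m.
have c0 : c != 0 by rewrite /c /m E3.
exists (c^-1 *: m); split => [a|]; last by rewrite phiZ mulVf.
by rewrite Zmul key !scalerA mulrC.
Qed.

End Tensor.

End BA.
End Helpers.

Theorem mainTheorem5 (R : realType) (A : completeNormedModType R[i])
    (mul : A -> A -> A) (T : completeNormedModType R[i]) (tp : A -> A -> T)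
    (la ra : A -> T -> T) (piA : T -> A) (phi : A -> R[i]) :
  banach_algebra mul ->
  proj_tensor tp ->
  left_action mul tp la ->
  right_action mul tp ra ->
  product_map mul tp piA ->
  approx_biprojective mul la ra piA ->
  character mul phi ->
  (has_left_approx_identity mul -> left_phi_contractible mul phi) /\
  (has_right_approx_identity mul -> right_phi_contractible mul phi).
Proof.
move=> BA PT LA RA PM AB CH; split.
- exact: (@left_case R A mul BA T tp phi PT CH la ra piA LA RA PM AB).
- exact: (@right_case R A mul BA T tp phi PT CH la ra piA LA RA PM AB).
Qed.
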